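(* Let $m^*$ be the exact model of the environment and let $m\in\mathcal{M}$ be any model. Fix a base policy $\pi^b$, and let $\pi_m^r$ be the rollout policy and $\pi_m^{ce}$ the certainty-equivalence policy obtained from $\pi^b$ in $m$. Suppose $m$ is a performance-resembling model (PRM) of $m^*$ with respect to $\Pi=\{\pi_m^r,\pi_m^{ce}\}$ and $J$. Then $J_{m^*}^{\pi_m^{ce}}\ge J_{m^*}^{\pi_m^{r}}$.
   Context: Fix finite sets $\mathcal{S}$ (states) and $\mathcal{A}$ (actions) and a discount factor $\gamma\in[0,1)$. A model is a triple $m=(p,r,d)$ with transition kernel $p:\mathcal{S}\times\mathcal{A}\times\mathcal{S}\to[0,1]$, reward function $r:\mathcal{S}\times\mathcal{A}\times\mathcal{S}\to\mathbb{R}$ and initial state distribution $d$ on $\mathcal{S}$; $\mathcal{M}$ is the set of all such models, and $m^*\in\mathcal{M}$ denotes the exact model of the environment. A policy is a map $\pi:\mathcal{S}\times\mathcal{A}\to[0,1]$ giving a distribution over actions at each state; $\mathbb{\Pi}$ is the set of all policies. For $m=(p,r,d)$ and $\pi\in\mathbb{\Pi}$, the performance is $J_m^\pi=\mathbb{E}_{\pi,p}[\sum_{t=0}^\infty\gamma^t r(S_t,A_t,S_{t+1})\mid S_0\sim d]$. Given a base policy $\pi^b$ and a model $m$, the rollout policy $\pi_m^r$ is the policy obtained by one step of policy iteration on $\pi^b$ in $m$ (policy evaluation of $\pi^b$ in $m$ followed by greedy policy improvement), and the certainty-equivalence policy $\pi_m^{ce}$ is the policy obtained by running policy iteration or value iteration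 to convergence in $m$ starting from $\pi^b$ (an optimal policy of $m$). Given $\Pi\subseteq\mathbb{\Pi}$, a model $m$ is a performance-resembling model (PRM) of $m^*$ w.r.t. $\Pi$ and $J$ if for all $\pi^i,\pi^j\in\Pi$, $J_m^{\pi^i}\ge J_m^{\pi^j}$ implies $J_{m^*}^{\pi^i}\ge J_{m^*}^{\pi^j}$. *)

(* Defs.v *)
From HB Require Import structures.
From mathcomp Require Import all_boot all_order all_algebra.
From mathcomp Require Import all_classical all_reals.
From mathcomp Require Import topology normedtype sequences.

Set Implicit Arguments.
Unset Strict Implicit.
Unset Printing Implicit Defensive.

Import Order.TTheory GRing.Theory Num.Theory.
Import numFieldNormedType.Exports.
Local Open Scope classical_set_scope.
Local Open Scope ring_scope.

Section MDP.
Variables (R : realType) (S A : finType).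

Record model := Model {
  mp : S -> A -> S -> R;
  mr : S -> A -> S -> R;
  md : S -> R              (* initial state distribution *)
}.

Definition valid_model (m : model) : Prop :=
  (forall s a s', 0 <= mp m s a s' <= 1) /\
  (forall s a, \sum_(s' : S) mp m s a s' = 1) /\
  (forall s, 0 <= md m s) /\ (\sum_(s : S) md m s = 1).

Definition policy := S -> A -> R.

Definition valid_policy (pi : policy) : Prop :=
  (forall s a, 0 <= pi s a <= 1) /\ (forall s, \sum_(a : A) pi s a = 1).

Fixpoint state_dist (m : model) (pi : policy) (d0 : S -> R) (t : nat) : S -> R :=
  match t with
  | 0%N => d0
  | t'.+1 => fun s' =>
      \sum_(s : S) \sum_(a : A)
        state_dist m pi d0 t' s * pi s a * mp m s a s'
  end.

Definition exp_reward (m : model) (pi : policy) (d0 : S -> R) (t : nat) : R :=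
  \sum_(s : S) \sum_(a : A) \sum_(s' : S)
    state_dist m pi d0 t s * pi s a * mp m s a s' * mr m s a s'.

(* E_{pi,p}[ sum_t gamma^t r(S_t,A_t,S_{t+1}) | S_0 ~ d0 ]
   (expectation exchanged with the absolutely convergent series). *)
Definition disc_return (gamma : R) (m : model) (pi : policy) (d0 : S -> R) : R :=
  limn (series (fun t : nat => gamma ^+ t * exp_reward m pi d0 t)).

Definition J (gamma : R) (m : model) (pi : policy) : R :=
  disc_return gamma m pi (md m).

Definition delta_at (s : S) : S -> R := fun s0 => if s0 == s then 1 else 0.

Definition V (gamma : R) (m : model) (pi : policy) (s : S) : R :=
  disc_return gamma m pi (delta_at s).

Definition Q (gamma : R) (m : model) (pi : policy) (s : S) (a : A) : R :=
  \sum_(s' : S) mp m s a s' * (mr m s a s' + gamma * V gamma m pi s').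

Definition greedy_wrt (q : S -> A -> R) (pi' : policy) : Prop :=
  forall s a, 0 < pi' s a -> forall a', q s a' <= q s a.

Definition is_rollout (gamma : R) (m : model) (pib pir : policy) : Prop :=
  valid_policy pir /\ greedy_wrt (Q gamma m pib) pir.

Definition is_optimal (gamma : R) (m : model) (pi : policy) : Prop :=
  valid_policy pi /\
  forall pi', valid_policy pi' -> forall s, V gamma m pi' s <= V gamma m pi s.

Definition PRM (gamma : R) (m mstar : model) (Pi : set policy) : Prop :=
  forall pii pij, Pi pii -> Pi pij ->
    J gamma m pij <= J gamma m pii -> J gamma mstar pij <= J gamma mstar pii.

End MDP.

(* Main.v *)
Require Import Defs.
From HB Require Import structures.
From mathcomp Require Import all_boot all_order all_algebra.
From mathcomp Require Import all_classical all_reals.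
From mathcomp Require Import topology normedtype sequences.
Import Order.TTheory GRing.Theory Num.Theory.
Import numFieldNormedType.Exports.
Local Open Scope classical_set_scope.
Local Open Scope ring_scope.

Section Aux.
Variables (R : realType) (S A : finType).
Implicit Types (m : model R S A) (pi : policy R S A).

Lemma sd_lin m pi (d0 : S -> R) t s' :
  state_dist m pi d0 t s' =
  \sum_(s0 : S) d0 s0 * state_dist m pi (@delta_at R S s0) t s'.
Proof.
elim: t s' => [|t IH] s' /=.
  rewrite (bigD1 s') //= /delta_at eqxx mulr1 big1 ?addr0 // => i.
  by rewrite eq_sym => /negbTE ->; rewrite mulr0.
under eq_bigr do under eq_bigr do rewrite IH !mulr_suml.
under [RHS]eq_bigr do rewrite mulr_sumr.
under [RHS]eq_bigr do under eq_bigr do rewrite mulr_sumr.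
rewrite [RHS]exchange_big /=; apply: eq_bigr => s _.
rewrite [RHS]exchange_big /=; apply: eq_bigr => a _; apply: eq_bigr => s0 _.
by rewrite !mulrA.
Qed.

Lemma er_lin m pi (d0 : S -> R) t :
  exp_reward m pi d0 t =
  \sum_(s0 : S) d0 s0 * exp_reward m pi (@delta_at R S s0) t.
Proof.
rewrite /exp_reward.
under eq_bigr do under eq_bigr do under eq_bigr do rewrite sd_lin !mulr_suml.
under [RHS]eq_bigr do rewrite mulr_sumr.
under [RHS]eq_bigr do under eq_bigr do rewrite mulr_sumr.
under [RHS]eq_bigr do under eq_bigr do under eq_bigr do rewrite mulr_sumr.
rewrite [RHS]exchange_big /=; apply: eq_bigr => s _.
rewrite [RHS]exchange_big /=; apply: eq_bigr => a _.
rewrite [RHS]exchange_big /=; apply: eq_bigr => s' _; apply: eq_bigr => s0 _.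
by rewrite !mulrA.
Qed.

Lemma sd_prob m pi (d0 : S -> R) t :
  valid_model m -> valid_policy pi ->
  (forall s, 0 <= d0 s) -> \sum_s d0 s = 1 ->
  (forall s, 0 <= state_dist m pi d0 t s) /\ \sum_s state_dist m pi d0 t s = 1.
Proof.
move=> [Hp [Hps _]] [Hpi Hpis] H0 H1.
elim: t => [|t [IH0 IH1]] //=; split.
  move=> s'; apply: sumr_ge0 => s _; apply: sumr_ge0 => a _.
  apply: mulr_ge0; first apply: mulr_ge0 => //.
  - by case/andP: (Hpi s a).
  - by case/andP: (Hp s a s').
rewrite exchange_big /= -IH1; apply: eq_bigr => s _.
rewrite exchange_big /= -[RHS]mulr1 -(Hpis s) mulr_sumr; apply: eq_bigr => a _.
by rewrite -mulr_sumr Hps mulr1.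
Qed.

Lemma delta_prob (s0 : S) :
  (forall s, 0 <= @delta_at R S s0 s :> R) /\ \sum_s @delta_at R S s0 s = 1 :> R.
Proof.
split; first by move=> s; rewrite /delta_at; case: eqP.
rewrite (bigD1 s0) //= /delta_at eqxx big1 ?addr0 // => i /negbTE -> //.
Qed.

Lemma er_bound m pi (s0 : S) t :
  valid_model m -> valid_policy pi ->
  `|exp_reward m pi (@delta_at R S s0) t| <=
    \sum_(s : S) \sum_(a : A) \sum_(s' : S) `|mr m s a s'|.
Proof.
move=> Hm Hpi; have [Hd0 Hd1] := delta_prob s0.
have [Hsd Hsd1] := @sd_prob m pi _ t Hm Hpi Hd0 Hd1.
have [Hp _] := Hm; have [Hpi1 _] := Hpi.
rewrite /exp_reward; apply: (le_trans (ler_norm_sum _ _ _)).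
apply: ler_sum => s _; apply: (le_trans (ler_norm_sum _ _ _)).
apply: ler_sum => a _; apply: (le_trans (ler_norm_sum _ _ _)).
apply: ler_sum => s' _.
have sdle : state_dist m pi (@delta_at R S s0) t s <= 1.
  rewrite -Hsd1 (bigD1 s) //= lerDl; exact: sumr_ge0.
case/andP: (Hpi1 s a) => pi0 pi1; case/andP: (Hp s a s') => p0 p1.
rewrite normrM ger0_norm; last by rewrite !mulr_ge0.
apply: ler_piMl => //; rewrite -[1]mulr1 ler_pM ?mulr_ge0 //.
by rewrite -[1]mulr1 ler_pM.
Qed.

Lemma er_cvg m pi (s0 : S) (gamma : R) :
  0 <= gamma < 1 -> valid_model m -> valid_policy pi ->
  cvgn (series (fun t : nat => gamma ^+ t * exp_reward m pi (@delta_at R S s0) t)).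
Proof.
move=> /andP[g0 g1] Hm Hpi.
apply: normed_cvg.
set M := \sum_(s : S) \sum_(a : A) \sum_(s' : S) `|mr m s a s'|.
have M0 : 0 <= M by do 3 (apply: sumr_ge0 => ? _).
apply: (@series_le_cvg _ _ (geometric M gamma)).
- by move=> n /=; rewrite normr_ge0.
- by move=> n /=; rewrite mulr_ge0 ?exprn_ge0.
- move=> n /=; rewrite normrM ger0_norm ?exprn_ge0 // mulrC.
  by apply: ler_wpM2r; [rewrite exprn_ge0 | apply: er_bound].
- by apply: is_cvg_geometric_series; rewrite ger0_norm.
Qed.

Lemma lim_bigsum (I : Type) (r : seq I) (c : I -> R) (u : I -> nat -> R) :
  (forall i, cvgn (u i)) ->
  (fun n => \sum_(i <- r) c i * u i n) @ \oo --> \sum_(i <- r) c i * limn (u i).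
Proof.
move=> Hu; elim: r => [|i r IH].
  under eq_fun do rewrite big_nil; rewrite big_nil; exact: cvg_cst.
under eq_fun do rewrite big_cons; rewrite big_cons.
apply: cvgD => //; apply: cvgMl_tmp; exact: Hu.
Qed.

Lemma disc_lin m pi (gamma : R) (d0 : S -> R) :
  0 <= gamma < 1 -> valid_model m -> valid_policy pi ->
  disc_return gamma m pi d0 = \sum_(s0 : S) d0 s0 * V gamma m pi s0.
Proof.
move=> Hg Hm Hpi; rewrite /disc_return /V /disc_return.
have -> : series (fun t : nat => gamma ^+ t * exp_reward m pi d0 t) =
   (fun n => \sum_(s0 : S) d0 s0 *
      series (fun t : nat => gamma ^+ t * exp_reward m pi (@delta_at R S s0) t) n).
  apply/funext => n; rewrite /series /=.
  under eq_bigr do rewrite er_lin mulr_sumr.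
  rewrite exchange_big /=; apply: eq_bigr => s0 _; rewrite mulr_sumr.
  by apply: eq_bigr => k _; rewrite !mulrA (mulrC (gamma ^+ k)).
apply: cvg_lim => //; apply: lim_bigsum => s0; exact: er_cvg.
Qed.

End Aux.

Theorem proposition2 (R : realType) (S A : finType) (gamma : R)
  (mstar m : model R S A) (pib pir pice : policy R S A) :
  0 <= gamma < 1 ->
  valid_model mstar -> valid_model m ->
  valid_policy pib ->
  is_rollout gamma m pib pir ->
  is_optimal gamma m pice ->
  PRM gamma m mstar [set pir; pice] ->
  J gamma mstar pir <= J gamma mstar pice.
Proof.
move=> Hg Hms Hm Hpib [Hpir _] [Hpice Hopt] Hprm.
apply: Hprm; [by right | by left |].
rewrite /J !disc_lin //; apply: ler_sum => s _.
have [_ [_ [Hd _]]] := Hm.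
by apply: ler_wpM2l => //; apply: Hopt.
Qed.
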